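(* Let $T$ be a positive integer and $\epsilon = T^{-1/3}$. Consider the forecaster that sets $S_0 = 0$ and, for $t = 1,\ldots,T$, predicts $p_t = 1/2 + \epsilon\cdot\mathrm{sgn}(S_{t-1})$, observes $x_t$, and sets $S_t = S_{t-1} + (x_t - p_t)$. If $x_1,\ldots,x_T$ are independent $\mathrm{Bernoulli}(1/2)$ bits, then $\mathbb{E}[\mathsf{smCE}(x,p)] \le C\,T^{1/3}$ for a universal constant $C$.
   Context: $\mathrm{sgn}(0) = 0$, $\mathrm{sgn}(y)=1$ for $y>0$, $\mathrm{sgn}(y)=-1$ for $y<0$. $\mathsf{smCE}(x,p) = \sup_{f \in \mathcal{F}} \sum_{t=1}^T f(p_t)(x_t - p_t)$, where $\mathcal{F}$ is the family of $1$-Lipschitz functions from $[0,1]$ to $[-1,1]$. *)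

(* Defs.v *)
From HB Require Import structures.
From mathcomp Require Import all_boot all_order all_algebra.
From mathcomp Require Import all_classical all_reals all_analysis.
Set Implicit Arguments. Unset Strict Implicit. Unset Printing Implicit Defensive.
Import Order.TTheory GRing.Theory Num.Theory.
Local Open Scope classical_set_scope.
Local Open Scope ring_scope.

Section Defs.
Variable R : realType.

(* bit sequence x_1..x_T, 0-indexed: x t = b_t in {0,1} for t < T *)
Definition bits (T : nat) (b : T.-tuple bool) (t : nat) : R :=
  (nth false b t)%:R.

Fixpoint fc_S (eps : R) (x : nat -> R) (t : nat) : R :=
  match t with
  | 0 => 0
  | t'.+1 => fc_S eps x t' + (x t' - (2^-1 + eps * Num.sg (fc_S eps x t')))
  end.

(* prediction p t = 1/2 + eps * sgn(S t)  (this is p_{t+1} in the paper) *)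
Definition fc_p (eps : R) (x : nat -> R) (t : nat) : R :=
  2^-1 + eps * Num.sg (fc_S eps x t).

(* f : [0,1] -> [-1,1], 1-Lipschitz (values outside [0,1] irrelevant) *)
Definition lip1 (f : R -> R) : Prop :=
  (forall a, 0 <= a <= 1 -> -1 <= f a <= 1) /\
  (forall a b, 0 <= a <= 1 -> 0 <= b <= 1 -> `|f a - f b| <= `|a - b|).

Definition smCE (T : nat) (x p : nat -> R) : R :=
  sup [set s | exists f, lip1 f /\ s = \sum_(t < T) f (p t) * (x t - p t)].

End Defs.

(* Main.v *)
Require Import Defs.
From HB Require Import structures.
From mathcomp Require Import all_boot all_order all_algebra.
From mathcomp Require Import all_classical all_reals all_analysis.
From mathcomp Require Import ring lra.
Import Order.TTheory GRing.Theory Num.Theory.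
Local Open Scope ring_scope.

Section Part1.
Variable R : realType.

Fixpoint Ex (n : nat) (F : seq bool -> R) : R :=
  match n with
  | 0 => F [::]
  | n'.+1 => (Ex n' (fun s => F (false :: s)) + Ex n' (fun s => F (true :: s))) / 2
  end.

Lemma sum_tupleS n (F : seq bool -> R) :
  \sum_(t : n.+1.-tuple bool) F t =
  \sum_(t : n.-tuple bool) (F (false :: t) + F (true :: t)).
Proof.
have -> : \sum_(t : n.-tuple bool) (F (false :: t) + F (true :: t)) =
  \sum_(t : n.-tuple bool) \sum_(b : bool) F (b :: t).
  by apply: eq_bigr => t _; rewrite big_bool /= addrC.
rewrite pair_big /=.
rewrite (reindex (fun t : n.+1.-tuple bool => (behead_tuple t, thead t))) /=.
  by apply: eq_bigr => t _; rewrite [in LHS](tuple_eta t).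
exists (fun p : n.-tuple bool * bool => [tuple of p.2 :: p.1]) => [t _|[t b] _] /=.
  by rewrite -tuple_eta.
by rewrite theadE; congr (_, _); apply: val_inj.
Qed.

Lemma Ex_tuple n (F : seq bool -> R) :
  (2 ^+ n)^-1 * \sum_(t : n.-tuple bool) F t = Ex n F.
Proof.
elim: n F => [|n IH] F /=.
  rewrite expr0 invr1 mul1r (eq_bigr (fun _ => F [::])); last first.
    by move=> t _; rewrite (tuple0 t).
  by rewrite sumr_const card_tuple card_bool expn0.
rewrite sum_tupleS big_split /= mulrDr -!IH exprS invfM.
rewrite mulrDl; congr (_ + _); rewrite mulrC mulrA // mulrC; lra.
Qed.

Lemma Ex_ext n F G : (forall s, F s = G s) -> Ex n F = Ex n G.
Proof.
elim: n F G => [|n IH] F G FG /=; first exact: FG.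
rewrite (IH (fun s => F (false :: s)) (fun s => G (false :: s))); last by move=> s; exact: FG.
by rewrite (IH (fun s => F (true :: s)) (fun s => G (true :: s))) // => s; exact: FG.
Qed.

Lemma Ex_le n F G : (forall s, F s <= G s) -> Ex n F <= Ex n G.
Proof.
elim: n F G => [|n IH] F G FG /=; first exact: FG.
have h1 := IH (fun s => F (false :: s)) (fun s => G (false :: s)) (fun s => FG _).
have h2 := IH (fun s => F (true :: s)) (fun s => G (true :: s)) (fun s => FG _).
lra.
Qed.

Lemma Ex_lin n a b c F G :
  Ex n (fun s => a + b * F s + c * G s) = a + b * Ex n F + c * Ex n G.
Proof.
elim: n a b c F G => [|n IH] a b c F G //=.
rewrite (IH a b c (fun s => F (false :: s))) (IH a b c (fun s => F (true :: s))).
lra.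
Qed.

Lemma Ex_cst n a : Ex n (fun=> a) = a.
Proof. elim: n => //= n ->; lra. Qed.


Section Proc.
Variable eps : R.

Fixpoint G (s : R) (x : nat -> R) (t : nat) : R :=
  match t with
  | 0 => s
  | t'.+1 => G s x t' + (x t' - (2^-1 + eps * Num.sg (G s x t')))
  end.

Definition step (s : R) (b : bool) : R := s + (b%:R - (2^-1 + eps * Num.sg s)).

Definition bitsf (s : seq bool) : nat -> R := fun t => (nth false s t)%:R.

Lemma G_shift s x t :
  G s x t.+1 = G (s + (x 0%N - (2^-1 + eps * Num.sg s))) (fun i => x i.+1) t.
Proof.
elim: t => [|t IH] //.
transitivity (G s x t.+1 + (x t.+1 - (2^-1 + eps * Num.sg (G s x t.+1)))); first by [].
by rewrite IH.
Qed.

Lemma G_cons s b bs t : G s (bitsf (b :: bs)) t.+1 = G (step s b) (bitsf bs) t.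
Proof. by rewrite G_shift. Qed.

Lemma fcS_G x t : fc_S eps x t = G 0 x t.
Proof. by elim: t => //= t ->. Qed.

Definition Mw (w : R -> R) s x n := \sum_(t < n) w (G s x t) * (x t - 2^-1).

Lemma Mw_cons w s b bs n :
  Mw w s (bitsf (b :: bs)) n.+1 = w s * (b%:R - 2^-1) + Mw w (step s b) (bitsf bs) n.
Proof.
rewrite /Mw big_ord_recl /=; congr (_ + _).
apply: eq_bigr => i _; rewrite /bump /= add1n.
have := G_cons s b bs i; rewrite /bitsf /= => ->.
by [].
Qed.

Lemma Mw_mean w n s : Ex n (fun bs => Mw w s (bitsf bs) n) = 0.
Proof.
elim: n s => [|n IH] s /=; first by rewrite /Mw big_ord0.
under Ex_ext do rewrite Mw_cons.
under [X in _ + X]Ex_ext do rewrite Mw_cons.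
have E (b : bool) : Ex n (fun bs => w s * (b%:R - 2^-1) + Mw w (step s b) (bitsf bs) n)
   = w s * (b%:R - 2^-1).
  rewrite (Ex_ext _ _ (fun bs => w s * (b%:R - 2^-1) + 1 * Mw w (step s b) (bitsf bs) n + 0 * 0)); last by move=> bs; ring.
  by rewrite (Ex_lin n _ _ _ _ (fun=> 0)) IH; ring.
rewrite !E /=; lra.
Qed.

Lemma Mw_sq w n s : (forall v, w v ^+ 2 <= 1) ->
  Ex n (fun bs => (Mw w s (bitsf bs) n) ^+ 2) <= n%:R / 4.
Proof.
move=> w1; elim: n s => [|n IH] s /=; first by rewrite /Mw big_ord0; lra.
under Ex_ext do rewrite Mw_cons.
under [X in _ + X]Ex_ext do rewrite Mw_cons.
have E (b : bool) : Ex n (fun bs => (w s * (b%:R - 2^-1) + Mw w (step s b) (bitsf bs) n) ^+ 2)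
   <= w s ^+ 2 / 4 + n%:R / 4.
  rewrite (Ex_ext _ _ (fun bs => (w s * (b%:R - 2^-1)) ^+ 2 + (2 * (w s * (b%:R - 2^-1))) * Mw w (step s b) (bitsf bs) n + 1 * (Mw w (step s b) (bitsf bs) n ^+ 2))); last by move=> bs; ring.
  rewrite Ex_lin Mw_mean.
  have := IH (step s b).
  have -> : (w s * (b%:R - 2^-1)) ^+ 2 = w s ^+ 2 / 4 by case: b => /=; field.
  lra.
have := E false; have := E true; have := w1 s.
rewrite -[n.+1]addn1 natrD; lra.
Qed.


Definition V (s : R) := expR (eps * s) + expR (- (eps * s)).

Lemma expR_inv_prod (a : R) : expR a * expR (- a) = 1.
Proof. by rewrite -expRD subrr expR0. Qed.

Lemma drift_const : 0 < eps <= 1 ->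
  let c := (expR (eps * 2^-1) + expR (- (eps * 2^-1))) / 2 in
  let x := eps * eps in
  [/\ c * expR (- x) <= 1 - x / 3, 0 <= c * (expR x - expR (- x)) <= 6 * x,
      0 <= c & 2 <= expR x + expR (- x)].
Proof.
move=> /andP[e0 e1] c x.
set h := expR (eps * 2^-1); set hi := expR (- (eps * 2^-1)).
have hh : h * hi = 1 by apply: expR_inv_prod.
have hlb : 1 + eps * 2^-1 <= h by apply: expR_ge1Dx.
have hilb : 1 - eps * 2^-1 <= hi by apply: expR_ge1Dx.
have h0 : 0 < h by apply: expR_gt0.
have hi0 : 0 < hi by apply: expR_gt0.
have x0 : 0 <= x by rewrite /x; nra.
have x1 : x <= 1 by rewrite /x; nra.
have ha : h * (1 - eps * 2^-1) <= 1.
  nra.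
have hia : hi * (1 + eps * 2^-1) <= 1.
  nra.
have c1 : c * (1 - x / 4) <= 1.
  have -> : c * (1 - x / 4) = (h * (1 - eps * 2^-1) * (1 + eps * 2^-1) +
        hi * (1 + eps * 2^-1) * (1 - eps * 2^-1)) / 2.
    by rewrite /c /x /h /hi; field.
  have p1 : 0 <= 1 + eps * 2^-1 by lra.
  have p2 : 0 <= 1 - eps * 2^-1 by lra.
  have q1 := ler_wpM2r p1 ha. have q2 := ler_wpM2r p2 hia.
  rewrite mul1r in q1 q2; lra.
have cE : c = (h + hi) / 2 by [].
clearbody c h hi.
have c0 : 0 <= c by rewrite cE; lra.
set E1 := expR x; set E2 := expR (- x).
have EE : E1 * E2 = 1 by apply: expR_inv_prod.
have E1lb : 1 + x <= E1 by apply: expR_ge1Dx.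
have E2lb : 1 - x <= E2 by apply: expR_ge1Dx.
have E20 : 0 < E2 by apply: expR_gt0.
have E2a : E2 * (1 + x) <= 1.
  nra.
have E2le1 : E2 <= 1 by nra.
set g := expR (x * 2^-1); set gi := expR (- (x * 2^-1)).
have gg : g * gi = 1 by apply: expR_inv_prod.
have glb : 1 + x * 2^-1 <= g by apply: expR_ge1Dx.
have gilb : 1 - x * 2^-1 <= gi by apply: expR_ge1Dx.
have g0 : 0 < g by apply: expR_gt0.
have ga : g * (1 - x * 2^-1) <= 1.
  nra.
have Eg : E1 = g * g by rewrite /E1 /g -expRD; congr expR; field.
clearbody E1 E2 g gi.
have g2 : g <= 2 by nra.
have g1 : g - 1 <= x by nra.
have E1ub : E1 - 1 <= 3 * x by rewrite Eg; nra.
have c43 : c <= 4 / 3 by nra.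
split => //.
-
  set P := (1 - x / 4) * (1 + x).
  have P0 : 0 < P by rewrite /P; nra.
  have cP : c * E2 * P <= 1.
    have -> : c * E2 * P = (c * (1 - x / 4)) * (E2 * (1 + x)) by rewrite /P; ring.
    have cc0 : 0 <= c * (1 - x / 4) by nra.
    have := ler_pM cc0 (ltW (mulr_gt0 E20 (ltac:(lra) : 0 < 1 + x))) c1 E2a.
    by rewrite mul1r.
  have Pb : 1 <= (1 - x / 3) * P.
    rewrite /P.
    have -> : (1 - x / 3) * ((1 - x / 4) * (1 + x)) = 1 + x * (1 - x) * (5 - x) / 12 by field.
    have : 0 <= x * (1 - x) * (5 - x) by apply: mulr_ge0; [apply: mulr_ge0|]; lra.
    lra.
  clearbody P; rewrite -(ler_pM2r P0); exact: le_trans cP Pb.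
- apply/andP; split; first by apply: mulr_ge0 => //; lra.
  have d0 : 0 <= E1 - E2 by lra.
  have d1 : E1 - E2 <= 4 * x by lra.
  nra.
- lra.
Qed.

Lemma V_step_avg s :
  (V (step s false) + V (step s true)) / 2 =
  (expR (eps * 2^-1) + expR (- (eps * 2^-1))) / 2 *
  (expR (eps * s) * expR (- (eps * (eps * Num.sg s))) +
   expR (- (eps * s)) * expR (eps * (eps * Num.sg s))).
Proof.
have ex (b : bool) : expR (eps * step s b) = expR (eps * s) *
    expR (- (eps * (eps * Num.sg s))) * expR (eps * (b%:R - 2^-1)).
  by rewrite -!expRD; congr expR; rewrite /step; ring.
have ex' (b : bool) : expR (- (eps * step s b)) = expR (- (eps * s)) *
    expR (eps * (eps * Num.sg s)) * expR (- (eps * (b%:R - 2^-1))).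
  by rewrite -!expRD; congr expR; rewrite /step; ring.
rewrite /V !ex !ex' /=.
have -> : eps * (0 - 2^-1) = - (eps * 2^-1) by ring.
have -> : eps * (1 - 2^-1) = eps * 2^-1 by field.
rewrite opprK; ring.
Qed.

Lemma drift s : 0 < eps <= 1 ->
  (V (step s false) + V (step s true)) / 2 <=
  (1 - eps * eps / 3) * V s + 6 * (eps * eps).
Proof.
move=> he; have := drift_const he; cbv zeta.
set c := (expR (eps * 2^-1) + expR (- (eps * 2^-1))) / 2.
set x := eps * eps.
move=> [ci /andP[c2a c2b] c0 E12].
rewrite V_step_avg -/c /V.
have ylez (a : R) : a <= 0 -> expR a <= 1 by move=> a0; rewrite -expR0 ler_expR.
case: (ltrgtP s 0) => [sn|sp|->].
- rewrite ltr0_sg // mulrN1 mulrN opprK -/x.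
  have y1 : expR (eps * s) <= 1 by apply: ylez; nra.
  have y0 := expR_gt0 (eps * s). have z0 := expR_gt0 (- (eps * s)).
  move: y1 y0 z0 ci c2a c2b c0.
  move: (expR (eps * s)) (expR (- (eps * s))) (expR x) (expR (- x)) => y z E1 E2.
  move=> y1 y0 z0 ci c2a c2b c0.
  have t1 := ler_wpM2r (ltW z0) ci.
  have t2 := ler_wpM2r (ltW y0) ci.
  have t3 := ler_wpM2r (ltW y0) c2b.
  have t4 : 6 * x * y <= 6 * x by nra.
  nra.
- rewrite gtr0_sg // mulr1 -/x.
  have z1 : expR (- (eps * s)) <= 1 by apply: ylez; nra.
  have y0 := expR_gt0 (eps * s). have z0 := expR_gt0 (- (eps * s)).
  move: z1 y0 z0 ci c2a c2b c0.
  move: (expR (eps * s)) (expR (- (eps * s))) (expR x) (expR (- x)) => y z E1 E2.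
  move=> z1 y0 z0 ci c2a c2b c0.
  have t1 := ler_wpM2r (ltW z0) ci.
  have t2 := ler_wpM2r (ltW y0) ci.
  have t3 := ler_wpM2r (ltW z0) c2b.
  have t4 : 6 * x * z <= 6 * x by nra.
  nra.
- rewrite sgr0 !mulr0 oppr0 expR0.
  have := ler_wpM2l c0 E12.
  move: ci c2a c2b c0; move: (expR x) (expR (- x)) => E1 E2 ci c2a c2b c0.
  nra.
Qed.

Lemma Ex_S n (F : seq bool -> R) :
  Ex n.+1 F = (Ex n (fun s => F (false :: s)) + Ex n (fun s => F (true :: s))) / 2.
Proof. by []. Qed.

Lemma Phi n s : 0 < eps <= 1 ->
  Ex n (fun bs => V (G s (bitsf bs) n)) <=
  (1 - eps * eps / 3) ^+ n * V s + 18 * (1 - (1 - eps * eps / 3) ^+ n).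
Proof.
move=> he; have /andP[e0 e1] := he.
set A := 1 - eps * eps / 3.
have A0 : 0 <= A by rewrite /A; nra.
elim: n s => [|n IH] s; first by rewrite /= expr0; lra.
rewrite Ex_S.
under Ex_ext => bs do rewrite G_cons.
under [X in _ + X]Ex_ext => bs do rewrite G_cons.
have h0 := IH (step s false); have h1 := IH (step s true).
have d := drift s he; rewrite -/A in d.
have an0 : 0 <= A ^+ n by apply: exprn_ge0.
have K : 6 * (eps * eps) = 18 * (1 - A) by rewrite /A; field.
rewrite K in d.
have := ler_wpM2l an0 d.
rewrite exprS.
move: h0 h1; clearbody A.
move: (A ^+ n) an0 => a an0 h0 h1 hd.
nra.
Qed.

Lemma Phi0 n : 0 < eps <= 1 -> Ex n (fun bs => V (G 0 (bitsf bs) n)) <= 20.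
Proof.
move=> he; have /andP[e0 e1] := he.
have := Phi n 0 he.
have A0 : 0 <= 1 - eps * eps / 3 by nra.
have A1 : 1 - eps * eps / 3 <= 1 by nra.
have an0 := exprn_ge0 n A0.
have an1 := exprn_ile1 n A0 A1.
rewrite /V mulr0 oppr0 expR0.
lra.
Qed.

Lemma abs_le_V s : 0 < eps -> eps * `|s| <= V s.
Proof.
move=> e0; rewrite /V.
have y0 := expR_gt0 (eps * s); have z0 := expR_gt0 (- (eps * s)).
have y1 := expR_ge1Dx (eps * s); have z1 := expR_ge1Dx (- (eps * s)).
case: (lerP 0 s) => s0.
- rewrite ger0_norm //; lra.
- rewrite ltr0_norm //; lra.
Qed.

End Proc.

End Part1.

Arguments G {R}. Arguments Ex {R}. Arguments Mw {R}. Arguments V {R}.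
Arguments bitsf {R}. Arguments step {R}. Arguments Phi0 {R}. Arguments Mw_sq {R}.
Arguments Mw_mean {R}. Arguments abs_le_V {R}. Arguments Ex_le {R}. Arguments Ex_lin {R}.
Arguments Ex_cst {R}. Arguments Ex_tuple {R}. Arguments Ex_ext {R}. Arguments fcS_G {R}.

Section P2.
Variable R : realType.

Definition Ipos (v : R) : R := if Num.sg v == 1 then 1 else 0.
Definition Ineg (v : R) : R := if Num.sg v == -1 then 1 else 0.

Lemma sg_cases (v : R) :
  [\/ [/\ Num.sg v = 1, Ipos v = 1 & Ineg v = 0],
      [/\ Num.sg v = -1, Ipos v = 0 & Ineg v = 1] |
      [/\ Num.sg v = 0, Ipos v = 0 & Ineg v = 0]].
Proof.
have n1 : ((1 : R) == -1) = false by apply/eqP; lra.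
have n2 : ((-1 : R) == 1) = false by apply/eqP; lra.
have n3 : ((0 : R) == 1) = false by apply/eqP; lra.
have n4 : ((0 : R) == -1) = false by apply/eqP; lra.
rewrite /Ipos /Ineg; case: (ltrgtP v 0) => [vn|vp|->].
- by apply: Or32; rewrite ltr0_sg // n2 eqxx.
- by apply: Or31; rewrite gtr0_sg // n1 eqxx.
- by apply: Or33; rewrite sgr0 n3 n4.
Qed.

Lemma telesc (eps : R) (x : nat -> R) T :
  \sum_(t < T) (x t - fc_p eps x t) = G eps 0 x T.
Proof.
elim: T => [|T IH]; first by rewrite big_ord0.
by rewrite big_ord_recr /= IH /fc_p fcS_G.
Qed.

Lemma sup_le_B (E : set R) B : 0 <= B ->
  (has_ubound E -> forall e, E e -> e <= B) -> sup E <= B.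
Proof.
move=> B0 H; case: (pselect (has_sup E)) => [[ne ub]|nh].
  by apply: ge_sup => // e Ee; exact: H ub e Ee.
by rewrite sup_out.
Qed.

Lemma unbounded T (x p : nat -> R) t0 :
  (forall t, 0 <= x t <= 1) -> (t0 < T)%N -> ~ (0 <= p t0 <= 1) ->
  ~ has_ubound [set s | exists f, lip1 f /\ s = \sum_(t < T) f (p t) * (x t - p t)].
Proof.
move=> x01 tT npr [M ubM].
set q := p t0.
have [c [cpos cpos0]] : exists c : R, (forall t, 0 < c * (x t - q)) /\ (c = 1 \/ c = -1).
  case: (ltP q 0) => q0.
    by exists 1; split; [move=> t; have := x01 t; lra | left].
  have q1 : 1 < q by apply: contra_notT npr; rewrite -leNgt => q1; apply/andP.
  by exists (-1); split; [move=> t; have := x01 t; lra | right].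
set D := \sum_(t < T) (if p t == q then c * (x t - q) else 0).
have D0 : 0 < D.
  rewrite /D (bigD1 (Ordinal tT)) //= eqxx.
  have : 0 <= \sum_(i < T | i != Ordinal tT) (if p i == q then c * (x i - q) else 0).
    apply: sumr_ge0 => i _; case: ifP => // _; exact: ltW.
  have := cpos t0; lra.
set k := (`|M| + 1) / D.
set f := fun a : R => if a == q then c * k else 0.
have lf : lip1 f.
  split.
    move=> a a01; rewrite /f; case: eqP => [aq|_]; last lra.
    by exfalso; apply: npr; rewrite -/q -aq.
  move=> a b a01 b01; rewrite /f.
  case: eqP => [aq|_]; first by exfalso; apply: npr; rewrite -/q -aq.
  case: eqP => [bq|_]; first by exfalso; apply: npr; rewrite -/q -bq.
  by rewrite subrr normr0.
have := ubM (\sum_(t < T) f (p t) * (x t - p t)) (ex_intro _ f (conj lf erefl)).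
have -> : \sum_(t < T) f (p t) * (x t - p t) = k * D.
  rewrite /D mulr_sumr; apply: eq_bigr => t _; rewrite /f.
  case: eqP => [->|_]; last by rewrite mul0r mulr0.
  by rewrite (_ : forall a b y : R, a * b * y = b * (a * y)) // => a b y; ring.
rewrite /k divfK; last by apply/eqP; lra.
have := ler_norm M; lra.
Qed.

Lemma term_bound (eps g M d Tr : R) : 0 < eps -> `|d| <= eps * Tr ->
  (`|g| <= eps \/ (M = 0 /\ d = 0)) -> g * (M + d) <= eps * (`|M| + eps * Tr).
Proof.
move=> e0 hd [hg|[-> ->]].
- apply: (le_trans (ler_norm _)); rewrite normrM.
  apply: ler_pM; rewrite ?normr_ge0 //.
  by apply: (le_trans (ler_normD _ _)); lra.
- rewrite addr0 mulr0 normr0 add0r; apply: mulr_ge0; first lra.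
  by apply: le_trans hd.  
Qed.

End P2.

Arguments G {R}. Arguments Ex {R}. Arguments Mw {R}. Arguments V {R}.
Arguments bitsf {R}. Arguments step {R}. Arguments Phi0 {R}. Arguments Mw_sq {R}.
Arguments Mw_mean {R}. Arguments abs_le_V {R}. Arguments Ex_le {R}. Arguments Ex_lin {R}.
Arguments Ex_cst {R}. Arguments Ex_tuple {R}. Arguments Ex_ext {R}. Arguments fcS_G {R}.
Arguments Ipos {R}. Arguments Ineg {R}.
Arguments sg_cases {R}. Arguments telesc {R}. Arguments sup_le_B {R}. Arguments unbounded {R}. Arguments term_bound {R}.

Section P3.
Variable R : realType.

Definition PB (eps : R) T (x : nat -> R) :=
  `|G eps 0 x T| + eps * (`|Mw eps Ipos 0 x T| + eps * T%:R)
                 + eps * (`|Mw eps Ineg 0 x T| + eps * T%:R).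

Lemma inrange_bound (eps : R) T (x : nat -> R) f : 0 < eps ->
  (forall t, (t < T)%N -> 0 <= fc_p eps x t <= 1) -> lip1 f ->
  \sum_(t < T) f (fc_p eps x t) * (x t - fc_p eps x t) <= PB eps T x.
Proof.
move=> e0 inr [fb fl].
have pE t : fc_p eps x t = 2^-1 + eps * Num.sg (G eps 0 x t) by rewrite /fc_p fcS_G.
set a := f 2^-1; set gp := f (2^-1 + eps) - a; set gm := f (2^-1 - eps) - a.
have pt t : f (fc_p eps x t) * (x t - fc_p eps x t) =
    a * (x t - fc_p eps x t)
  + gp * (Ipos (G eps 0 x t) * (x t - 2^-1) + - (eps * Ipos (G eps 0 x t)))
  + gm * (Ineg (G eps 0 x t) * (x t - 2^-1) + eps * Ineg (G eps 0 x t)).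
  rewrite pE /gp /gm /a.
  case: (sg_cases (G eps 0 x t)) => [[-> -> ->]|[-> -> ->]|[-> -> ->]];
    rewrite ?mulr1 ?mulrN1 ?mulr0 ?addr0; ring.
rewrite (eq_bigr _ (fun (t : 'I_T) _ => pt t)) !big_split /= -!mulr_sumr telesc.
rewrite sumrB big_split /= -!mulr_sumr.
rewrite -/(Mw eps Ipos 0 x T) -/(Mw eps Ineg 0 x T).
set Np := \sum_(i < T) Ipos (G eps 0 x i).
set Nm := \sum_(i < T) Ineg (G eps 0 x i).
have Ib (w : R -> R) : (forall v, 0 <= w v <= 1) ->
    0 <= \sum_(i < T) w (G eps 0 x i) <= T%:R.
  move=> wb; apply/andP; split; first by apply: sumr_ge0 => i _; case/andP: (wb (G eps 0 x i)).
  rewrite -[T in T%:R]card_ord -sumr_const; apply: ler_sum => i _.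
  by case/andP: (wb (G eps 0 x i)).
have Ipb : forall v : R, 0 <= Ipos v <= 1 by move=> v; rewrite /Ipos; case: (Num.sg v == 1); lra.
have Imb : forall v : R, 0 <= Ineg v <= 1 by move=> v; rewrite /Ineg; case: (Num.sg v == -1); lra.
have /andP[Np0 NpT] := Ib _ Ipb. have /andP[Nm0 NmT] := Ib _ Imb.
have ha : `|a| <= 1.
  have h : -1 <= a <= 1 by apply: fb; apply/andP; split; lra.
  by rewrite ler_norml.
have b1 : a * G eps 0 x T <= `|G eps 0 x T|.
  apply: (le_trans (ler_norm _)); rewrite normrM.
  have := normr_ge0 (G eps 0 x T); nra.
have b2 : gp * (Mw eps Ipos 0 x T + - (eps * Np)) <= eps * (`|Mw eps Ipos 0 x T| + eps * T%:R).
  apply: term_bound => //.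
    rewrite normrN ger0_norm; last by apply: mulr_ge0 => //; lra.
    by apply: ler_wpM2l => //; lra.
  case: (lerP (2^-1 + eps) 1) => h.
    left; rewrite /gp /a.
    have := fl (2^-1 + eps) 2^-1 (ltac:(apply/andP; split; lra)) (ltac:(apply/andP; split; lra)).
    by rewrite addrAC subrr add0r (ger0_norm (ltW e0)) -/a.
  right.
  have z : forall i : 'I_T, Ipos (G eps 0 x i) = 0.
    move=> i; have := inr i (ltn_ord i); rewrite pE.
    by case: (sg_cases (G eps 0 x i)) => [[-> _ _]|[_ -> _]|[_ -> _]] //; lra.
  split; first by rewrite /Mw; apply: big1 => i _; rewrite z mul0r.
  by rewrite /Np big1 ?mulr0 ?oppr0 // => i _; rewrite z.
have b3 : gm * (Mw eps Ineg 0 x T + eps * Nm) <= eps * (`|Mw eps Ineg 0 x T| + eps * T%:R).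
  apply: term_bound => //.
    rewrite ger0_norm; last by apply: mulr_ge0 => //; lra.
    by apply: ler_wpM2l => //; lra.
  case: (lerP 0 (2^-1 - eps)) => h.
    left; rewrite /gm /a.
    have := fl (2^-1 - eps) 2^-1 (ltac:(apply/andP; split; lra)) (ltac:(apply/andP; split; lra)).
    rewrite (_ : 2^-1 - eps - 2^-1 = - eps); last by ring.
    by rewrite normrN (ger0_norm (ltW e0)) -/a.
  right.
  have z : forall i : 'I_T, Ineg (G eps 0 x i) = 0.
    move=> i; have := inr i (ltn_ord i); rewrite pE.
    by case: (sg_cases (G eps 0 x i)) => [[_ _ ->]|[-> _ _]|[_ _ ->]] //; lra.
  split; first by rewrite /Mw; apply: big1 => i _; rewrite z mul0r.
  by rewrite /Nm big1 ?mulr0 // => i _; rewrite z.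
rewrite /PB; lra.
Qed.

End P3.

Arguments G {R}. Arguments Ex {R}. Arguments Mw {R}. Arguments V {R}.
Arguments bitsf {R}. Arguments step {R}. Arguments Phi0 {R}. Arguments Mw_sq {R}.
Arguments Mw_mean {R}. Arguments abs_le_V {R}. Arguments Ex_le {R}. Arguments Ex_lin {R}.
Arguments Ex_cst {R}. Arguments Ex_tuple {R}. Arguments Ex_ext {R}. Arguments fcS_G {R}.
Arguments Ipos {R}. Arguments Ineg {R}.
Arguments sg_cases {R}. Arguments telesc {R}. Arguments sup_le_B {R}. Arguments unbounded {R}. Arguments term_bound {R}.
Arguments PB {R}. Arguments inrange_bound {R}.

Section P4.
Variable R : realType.

Lemma PB_ge0 (eps : R) T x : 0 < eps -> 0 <= PB eps T x.
Proof.
move=> e0; rewrite /PB.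
have n1 := normr_ge0 (G eps 0 x T).
have n2 := normr_ge0 (Mw eps Ipos 0 x T).
have n3 := normr_ge0 (Mw eps Ineg 0 x T).
have T0 : (0 : R) <= T%:R by apply: ler0n.
have : 0 <= eps * T%:R by apply: mulr_ge0 => //; lra.
nra.
Qed.

Lemma path_smCE (eps : R) T (bs : seq bool) : 0 < eps <= 1 ->
  smCE T (bitsf bs) (fc_p eps (bitsf bs)) <= PB eps T (bitsf bs).
Proof.
move=> /andP[e0 e1]; rewrite /smCE; apply: sup_le_B; first exact: PB_ge0.
move=> hub e [f [lf ->]].
have x01 : forall t : nat, 0 <= @bitsf R bs t <= 1.
  by move=> t; rewrite /bitsf; case: (nth false bs t) => /=; apply/andP; split; lra.
case: (pselect (forall t, (t < T)%N -> 0 <= fc_p eps (bitsf bs) t <= 1)) => H.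
  exact: inrange_bound.
exfalso; move/existsNP: H => [t0 /not_implyP [tT npr]].
exact: (unbounded T (bitsf bs) (fc_p eps (bitsf bs)) t0 x01 tT npr hub).
Qed.

Lemma Ex_add n (F H : seq bool -> R) :
  Ex n (fun s => F s + H s) = Ex n F + Ex n H.
Proof.
rewrite (Ex_ext n _ (fun s => 0 + 1 * F s + 1 * H s)); last by move=> s; ring.
by rewrite Ex_lin; ring.
Qed.

Lemma Ex_scale n c (F : seq bool -> R) :
  Ex n (fun s => c * F s) = c * Ex n F.
Proof.
rewrite (Ex_ext n _ (fun s => 0 + c * F s + 0 * F s)); last by move=> s; ring.
by rewrite Ex_lin; ring.
Qed.

Lemma absM_bound (eps M : R) : 0 < eps -> eps * `|M| <= 2^-1 + eps ^+ 2 / 2 * M ^+ 2.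
Proof.
move=> e0; have := sqr_ge0 (eps * `|M| - 1).
have : (eps * `|M|) ^+ 2 = eps ^+ 2 * M ^+ 2 by rewrite exprMn real_normK ?num_real.
move=> h1 h2.
have : 2 * (eps * `|M|) <= 1 + eps ^+ 2 * M ^+ 2.
  rewrite -h1. rewrite sqrrB1 in h2; lra.
lra.
Qed.

Lemma Ex_PB (eps u : R) T : 0 < eps <= 1 -> u * eps = 1 -> eps ^+ 2 * T%:R = u ->
  Ex T (fun bs => PB eps T (bitsf bs)) <= 2^-1 * 2 + 2 * u + 20 * u + u / 4.
Proof.
move=> he ue eT; have /andP[e0 e1] := he.
have u0 : 0 < u by nra.
set Q := fun bs : seq bool =>
   (1 + 2 * u) + u * V eps (G eps 0 (bitsf bs) T)
   + eps ^+ 2 / 2 * (Mw eps Ipos 0 (bitsf bs) T) ^+ 2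
   + eps ^+ 2 / 2 * (Mw eps Ineg 0 (bitsf bs) T) ^+ 2.
apply: (le_trans (Ex_le T _ Q _)).
  move=> bs; rewrite /PB /Q.
  have g1 := abs_le_V eps (G eps 0 (bitsf bs) T) e0.
  have g2 : `|G eps 0 (bitsf bs) T| <= u * V eps (G eps 0 (bitsf bs) T).
    have := ler_wpM2l (ltW u0) g1; rewrite mulrA ue mul1r; done.
  have m1 := absM_bound eps (Mw eps Ipos 0 (bitsf bs) T) e0.
  have m2 := absM_bound eps (Mw eps Ineg 0 (bitsf bs) T) e0.
  have : eps * (eps * T%:R) = u by rewrite mulrA -expr2.
  lra.
rewrite /Q !Ex_add !Ex_scale !Ex_cst.
have p0 := Phi0 eps T he.
have q1 := Mw_sq eps Ipos T 0 (ltac:(move=> v; rewrite /Ipos; case: (Num.sg v == 1); lra)).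
have q2 := Mw_sq eps Ineg T 0 (ltac:(move=> v; rewrite /Ineg; case: (Num.sg v == -1); lra)).
have k0 : 0 <= eps ^+ 2 / 2 by apply: divr_ge0; [exact: sqr_ge0|lra].
have := ler_wpM2l k0 q1; have := ler_wpM2l k0 q2; have := ler_wpM2l (ltW u0) p0.
have -> : eps ^+ 2 / 2 * (T%:R / 4) = u / 8 by rewrite -eT; field.
lra.
Qed.

End P4.

Arguments G {R}. Arguments Ex {R}. Arguments Mw {R}. Arguments V {R}.
Arguments bitsf {R}. Arguments step {R}. Arguments Phi0 {R}. Arguments Mw_sq {R}.
Arguments Mw_mean {R}. Arguments abs_le_V {R}. Arguments Ex_le {R}. Arguments Ex_lin {R}.
Arguments Ex_cst {R}. Arguments Ex_tuple {R}. Arguments Ex_ext {R}. Arguments fcS_G {R}.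
Arguments Ipos {R}. Arguments Ineg {R}.
Arguments PB {R}. Arguments path_smCE {R}. Arguments Ex_PB {R}.

Theorem lemma8 (R : realType) :
  exists C : R, forall T : nat, (0 < T)%N ->
    let eps : R := (T%:R : R) `^ (- 3^-1) in
    (2 ^+ T)^-1 * \sum_(b : T.-tuple bool)
        smCE T (@bits R T b) (fc_p eps (@bits R T b))
      <= C * (T%:R : R) `^ 3^-1.
Proof.
exists 24; move=> T T0; cbv zeta.
set eps := (T%:R : R) `^ (- 3^-1).
set u := (T%:R : R) `^ 3^-1.
have T1 : (1 : R) <= T%:R by rewrite ler1n.
have u0 : 0 < u by apply: powR_gt0; lra.
have eu : eps = u^-1 by rewrite /eps powRN.
have u3 : u ^+ 3 = T%:R.
  rewrite -powR_mulrn; last exact: ltW.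
  rewrite /u -powRrM mulVf; last by apply/eqP; lra.
  by rewrite powRr1 // ler0n.
have u1 : 1 <= u.
  case: (lerP 1 u) => // ul; exfalso.
  have : u ^+ 3 < 1 by rewrite expr_lt1 //; exact: ltW.
  lra.
have ue : u * eps = 1 by rewrite eu mulfV //; apply/eqP; lra.
have e0 : 0 < eps by rewrite eu invr_gt0.
have he : 0 < eps <= 1 by apply/andP; split => //; nra.
have eT : eps ^+ 2 * T%:R = u.
  rewrite -u3 eu; field; apply/eqP; lra.
have -> : (2 ^+ T)^-1 * \sum_(b : T.-tuple bool) smCE T (@bits R T b) (fc_p eps (@bits R T b)) =
    Ex T (fun s : seq bool => smCE T (bitsf s) (fc_p eps (bitsf s))).
  by rewrite -Ex_tuple.
apply: (le_trans (Ex_le T _ _ (fun bs => path_smCE eps T bs he))).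
apply: (le_trans (Ex_PB eps u T he ue eT)).
lra.
Qed.
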